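(* Let $S$ be a semigroup and let $a\in S$ be an idempotent such that $aSa\subseteq\operatorname{Reg}(S)$. Let $P=\{x\in Sa: x\,\mathscr L\,ax\}$, and let $\phi:P\to aSa$, $x\mapsto ax$. Then $\phi$ is a surjective homomorphism, and (i) $E(Sa)=E(aSa)\phi^{-1}$; (ii) $\mathbb E(Sa)=\mathbb E(aSa)\phi^{-1}$.
   Context: $Sa=\{xa:x\in S\}$ and $aSa=\{axa:x\in S\}$ (a monoid with identity $a$). $\operatorname{Reg}(S)$ is the set of regular elements of $S$. $\mathscr L$ is Green's $\mathscr L$-relation on $S$. For a semigroup $T$, $E(T)$ is its set of idempotents and $\mathbb E(T)=\langle E(T)\rangle$ is the subsemigroup generated by its idempotents. $\phi^{-1}$ denotes preimage. *)

(* Defs.v *)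
Set Implicit Arguments.

Section SemigroupDefs.
Variable S : Type.
Variable mul : S -> S -> S.

Definition regular (x : S) : Prop := exists y, mul (mul x y) x = x.

Definition idempotent (e : S) : Prop := mul e e = e.

(* Green's L-relation: S^1 x = S^1 y *)
Definition greenL (x y : S) : Prop :=
  (x = y \/ exists s, x = mul s y) /\ (y = x \/ exists t, y = mul t x).

Definition rightIdeal_Sa (a : S) (y : S) : Prop := exists x, y = mul x a.

Definition local_aSa (a : S) (y : S) : Prop := exists x, y = mul (mul a x) a.

Definition idems (T : S -> Prop) (x : S) : Prop := T x /\ idempotent x.

Inductive gen (A : S -> Prop) : S -> Prop :=
| gen_base : forall x, A x -> gen A x
| gen_mul : forall x y, gen A x -> gen A y -> gen A (mul x y).

Definition Pset (a : S) (x : S) : Prop :=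
  rightIdeal_Sa a x /\ greenL x (mul a x).

End SemigroupDefs.

(* Main.v *)
Require Import Defs.
From Stdlib Require Import Setoid.

Lemma gen_mono (S : Type) (mul : S -> S -> S) (A B : S -> Prop) :
  (forall x, A x -> B x) -> forall x, gen mul A x -> gen mul B x.
Proof.
  intros H x g; induction g.
  - apply gen_base; auto.
  - apply gen_mul; auto.
Qed.

Theorem theorem3p13 (S : Type) (mul : S -> S -> S)
  (mulA : forall x y z, mul x (mul y z) = mul (mul x y) z)
  (a : S) (ha : idempotent mul a)
  (hreg : forall x, local_aSa mul a x -> regular mul x) :
  let P := Pset mul a in
  let phi := fun x => mul a x in
  (* P is a subsemigroup, phi : P -> aSa is a surjective homomorphism *)
  ((forall x y, P x -> P y -> P (mul x y)) /\
   (forall x, P x -> local_aSa mul a (phi x)) /\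
   (forall x y, P x -> P y -> phi (mul x y) = mul (phi x) (phi y)) /\
   (forall z, local_aSa mul a z -> exists x, P x /\ phi x = z)) /\
  (* (i) E(Sa) = E(aSa) phi^{-1} *)
  (forall x, idems mul (rightIdeal_Sa mul a) x <->
             (P x /\ idems mul (local_aSa mul a) (phi x))) /\
  (* (ii) EE(Sa) = EE(aSa) phi^{-1} *)
  (forall x, gen mul (idems mul (rightIdeal_Sa mul a)) x <->
             (P x /\ gen mul (idems mul (local_aSa mul a)) (phi x))).
Proof.
  intros P phi. unfold idempotent in ha.
  assert (xa : forall x, rightIdeal_Sa mul a x -> mul x a = x).
  { intros x [y ->]. rewrite <- mulA, ha. reflexivity. }
  assert (Pchar : forall x, rightIdeal_Sa mul a x ->
     (x = mul a x \/ exists s, x = mul s (mul a x)) -> P x).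
  { intros x Hx H. split; [exact Hx|]. split; [exact H|].
    right. exists a. reflexivity. }
  assert (Pdes : forall x, P x -> rightIdeal_Sa mul a x /\
     (x = mul a x \/ exists s, x = mul s (mul a x))).
  { intros x [Hx [H _]]. auto. }
  assert (aSa_Sa : forall z, local_aSa mul a z -> rightIdeal_Sa mul a z).
  { intros z [u ->]. exists (mul a u). reflexivity. }
  assert (philoc : forall x, rightIdeal_Sa mul a x -> local_aSa mul a (mul a x)).
  { intros x Hx. exists x. rewrite <- mulA, (xa x Hx). reflexivity. }
  assert (Pmul : forall x y, P x -> P y -> P (mul x y)).
  { intros x y Hx Hy. destruct (Pdes x Hx) as [[u Hu] Hx2]; clear Hx.
    destruct (Pdes y Hy) as [[v Hv] _].
    apply Pchar.
    - exists (mul x v). subst y. apply mulA.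
    - destruct Hx2 as [E | [s E]].
      + left. rewrite E at 1. rewrite mulA. reflexivity.
      + right. exists s. rewrite E at 1. rewrite !mulA. reflexivity. }
  assert (hom : forall x y, P x -> P y -> phi (mul x y) = mul (phi x) (phi y)).
  { intros x y Hx Hy. unfold phi. destruct (Pdes x Hx) as [Hx0 _]; clear Hx; rename Hx0 into Hx.
    rewrite (mulA (mul a x)), <- (mulA a x a), (xa x Hx), mulA. reflexivity. }
  assert (partI : forall x, idems mul (rightIdeal_Sa mul a) x <->
             (P x /\ idems mul (local_aSa mul a) (phi x))).
  { intros x; split.
    - intros [Hx Hid]. unfold idempotent in Hid. split.
      + apply Pchar; [exact Hx|]. right. exists x.
        rewrite mulA, (xa x Hx). symmetry; exact Hid.
      + split; [apply philoc; exact Hx|]. unfold idempotent, phi.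
        rewrite mulA, <- (mulA a x a), (xa x Hx), <- (mulA a x x), Hid. reflexivity.
    - intros [HP [_ Hid]]. unfold idempotent, phi in Hid.
      destruct (Pdes x HP) as [Hx [E | [s E]]]; split; auto; unfold idempotent.
      + rewrite E. exact Hid.
      + rewrite <- (xa x Hx) at 1. rewrite <- mulA. rewrite E at 1.
        rewrite <- mulA, Hid, <- E. reflexivity. }
  split; [split; [exact Pmul | split; [| split]] | split; [exact partI |]].
  - intros x HP. apply philoc. apply (Pdes x HP).
  - exact hom.
  - intros z Hz. exists z. assert (az : mul a z = z).
    { destruct Hz as [u ->]. rewrite !mulA, ha. reflexivity. }
    split.
    + apply Pchar; [apply aSa_Sa; exact Hz|]. left. symmetry; exact az.
    + exact az.
  - intros x; split.
    + intro g. induction g as [x Hx | x y gx [IHx1 IHx2] gy [IHy1 IHy2]].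
      * apply partI in Hx as [HP Hi]. split; [exact HP | apply gen_base; exact Hi].
      * split; [apply Pmul; assumption|]. rewrite hom by assumption.
        apply gen_mul; assumption.
    + intros [HP g].
      assert (g' : gen mul (idems mul (rightIdeal_Sa mul a)) (phi x)).
      { revert g. apply gen_mono. intros z [Hz Hi]. split; [apply aSa_Sa|]; assumption. }
      destruct (Pdes x HP) as [Hx [E | [s E]]].
      * rewrite E. exact g'.
      * unfold phi in g'.
        destruct (hreg (mul a x) (philoc x Hx)) as [y Hy].
        set (y' := mul (mul a y) a).
        assert (Hxx : mul (mul x y') x = x).
        { unfold y'.
          assert (X1 : mul (mul x (mul (mul a y) a)) x = mul s (mul (mul (mul a x) y) (mul a x))).
          { rewrite E at 1. rewrite !mulA. rewrite <- (mulA (mul s a) x a), (xa x Hx). reflexivity. }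
          rewrite X1, Hy. symmetry. exact E. }
        assert (He : idems mul (rightIdeal_Sa mul a) (mul x y')).
        { split.
          - exists (mul x (mul a y)). unfold y'. rewrite !mulA. reflexivity.
          - unfold idempotent. rewrite mulA, Hxx. reflexivity. }
        replace x with (mul (mul x y') (mul a x)).
        -- apply gen_mul; [apply gen_base; exact He | exact g'].
        -- unfold y' in *.
           assert (Q : mul (mul (mul a y) a) (mul a x) = mul (mul (mul a y) a) x)
             by (rewrite (mulA _ a x), <- (mulA _ a a), ha; reflexivity).
           rewrite <- mulA, Q, mulA. exact Hxx.
Qed.
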